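(* Let $\mathcal H=\{H_1,\dots,H_n\}$ be oriented affine hyperplanes in $\mathbb R^d$ and $X\subseteq\mathbb R^d$ such that $(\mathcal H,X)$ is a stable arrangement. Then every nonempty atom $A_\sigma$ ($\sigma\subseteq[n]$) of the cover $\{H_i^+\cap X\}_{i\in[n]}$ of $X$ has nonempty interior.
   Context: An oriented affine hyperplane is $H_i=\{x:w_i\cdot x-h_i=0\}$ with $w_i\in\mathbb R^d\setminus\{0\}$, $h_i\in\mathbb R$, and $H_i^+=\{w_i\cdot x-h_i>0\}$, $H_i^-=\{w_i\cdot x-h_i<0\}$. The atom of $\sigma\subseteq[n]$ is $A_\sigma=\bigl(\bigcap_{i\in\sigma}(H_i^+\cap X)\bigr)\setminus\bigcup_{j\notin\sigma}H_j^+$, with $A_\emptyset=X\setminus\bigcup_iH_i^+$. $(\mathcal H,X)$ is stable if $X$ is open and convex and for every $\sigma\subseteq[n]$ with $X\cap\bigcap_{i\in\sigma}H_i\neq\emptyset$, the affine subspace $\bigcap_{i\in\sigma}H_i$ has dimension $d-|\sigma|$. *)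

(* Defs.v *)
(* R^d is modelled as 'rV[R]_d, R : realType,
   with the (max-norm, hence Euclidean) topology of matrix_normedtype. *)
From HB Require Import structures.
From mathcomp Require Import all_boot all_order all_algebra.
From mathcomp Require Import all_classical all_reals all_analysis.
Set Implicit Arguments. Unset Strict Implicit. Unset Printing Implicit Defensive.
Import Order.TTheory GRing.Theory Num.Theory.
Import numFieldTopology.Exports numFieldNormedType.Exports.
Local Open Scope classical_set_scope.
Local Open Scope ring_scope.

Definition dotv (R : realType) (d : nat) (u v : 'rV[R]_d) : R :=
  \sum_(k < d) u 0 k * v 0 k.

Definition hyp (R : realType) (d n : nat) (w : 'I_n -> 'rV[R]_d) (h : 'I_n -> R)
  (i : 'I_n) : set 'rV[R]_d := [set x | dotv (w i) x - h i = 0].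
Definition hyp_pos (R : realType) (d n : nat) (w : 'I_n -> 'rV[R]_d) (h : 'I_n -> R)
  (i : 'I_n) : set 'rV[R]_d := [set x | dotv (w i) x - h i > 0].

(* intersection of the hyperplanes H_i, i in sigma (= R^d for sigma empty) *)
Definition hyp_cap (R : realType) (d n : nat) (w : 'I_n -> 'rV[R]_d) (h : 'I_n -> R)
  (sigma : {set 'I_n}) : set 'rV[R]_d :=
  \bigcap_(i in [set i | i \in sigma]) hyp w h i.

(* atom A_sigma = (cap_{i in sigma} (H_i^+ ∩ X)) \ (cup_{j notin sigma} H_j^+);
   note: for sigma = set0 the first intersection is taken inside X, giving X \ cup H_i^+ *)
Definition atom (R : realType) (d n : nat) (w : 'I_n -> 'rV[R]_d) (h : 'I_n -> R)
  (X : set 'rV[R]_d) (sigma : {set 'I_n}) : set 'rV[R]_d :=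
  [set x | X x /\ (forall i, i \in sigma -> hyp_pos w h i x)
               /\ (forall j, j \notin sigma -> ~ hyp_pos w h j x)].

Definition affine_subspace_of_dim (R : realType) (d k : nat) (S : set 'rV[R]_d) :=
  exists (p : 'rV[R]_d) (B : 'M[R]_(k, d)),
    row_free B /\ S = [set p + u *m B | u in [set: 'rV[R]_k]].

Definition convex (R : realType) (d : nat) (X : set 'rV[R]_d) :=
  forall x y (t : R), X x -> X y -> 0 <= t -> t <= 1 -> X ((1 - t) *: x + t *: y).

Definition stable (R : realType) (d n : nat) (w : 'I_n -> 'rV[R]_d) (h : 'I_n -> R)
  (X : set 'rV[R]_d) :=
  open X /\ convex X /\
  forall sigma : {set 'I_n}, X `&` hyp_cap w h sigma !=set0 ->
    (#|sigma| <= d)%N /\ affine_subspace_of_dim (d - #|sigma|)%N (hyp_cap w h sigma).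

(* Main.v *)
Require Import Defs.
From HB Require Import structures.
From mathcomp Require Import all_boot all_order all_algebra.
From mathcomp Require Import all_classical all_reals all_analysis.
From mathcomp Require Import zify.
Import Order.TTheory GRing.Theory Num.Theory.
Import numFieldTopology.Exports numFieldNormedType.Exports.
Local Open Scope classical_set_scope.
Local Open Scope ring_scope.

Section Aux.
Variables (R : realType) (d : nat).
Implicit Types (u z y : 'rV[R]_d).

Lemma dotvD u z y : dotv u (z + y) = dotv u z + dotv u y.
Proof. by rewrite /dotv -big_split /=; apply: eq_bigr => k _; rewrite mxE mulrDr. Qed.
Lemma dotvZ u (a : R) z : dotv u (a *: z) = a * dotv u z.
Proof. by rewrite /dotv big_distrr /=; apply: eq_bigr => k _; rewrite mxE mulrCA. Qed.
Lemma dotv0 u : dotv u 0 = 0.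
Proof. by rewrite /dotv big1 // => k _; rewrite mxE mulr0. Qed.
Lemma dotvN u z : dotv u (- z) = - dotv u z.
Proof. by rewrite -scaleN1r dotvZ mulN1r. Qed.
Lemma dotvB u z y : dotv u (z - y) = dotv u z - dotv u y.
Proof. by rewrite dotvD dotvN. Qed.
Lemma dotv_sum u (I : finType) (P : pred I) (F : I -> 'rV[R]_d) :
  dotv u (\sum_(i | P i) F i) = \sum_(i | P i) dotv u (F i).
Proof. by apply: (big_morph _ (dotvD u) (dotv0 u)). Qed.

Lemma dotv_cont u : continuous (fun z : 'rV[R]_d => dotv u z).
Proof.
rewrite /dotv; apply: continuous_big => //.
  exact: add_continuous.
move=> k _ z.
apply: (@cvgM R _ (nbhs z) _ (fun _ => u 0 k) (fun x : 'rV[R]_d => x 0 k)).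
  exact: cvg_cst.
exact: coord_continuous.
Qed.

Lemma aff_dim_uniq k1 k2 (p1 p2 : 'rV[R]_d) (B1 : 'M[R]_(k1, d)) (B2 : 'M[R]_(k2, d)) :
  row_free B1 -> row_free B2 ->
  [set p1 + u *m B1 | u in [set: 'rV[R]_k1]] = [set p2 + u *m B2 | u in [set: 'rV[R]_k2]] ->
  k1 = k2.
Proof.
have sub : forall k1 k2 (p1 p2 : 'rV[R]_d) (B1 : 'M[R]_(k1, d)) (B2 : 'M[R]_(k2, d)),
  [set p1 + u *m B1 | u in [set: 'rV[R]_k1]] = [set p2 + u *m B2 | u in [set: 'rV[R]_k2]] ->
  (B1 <= B2)%MS.
  move=> m1 m2 q1 q2 C1 C2 E.
  have : [set q2 + u *m C2 | u in [set: 'rV[R]_m2]] q1.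
    by rewrite -E; exists 0 => //; rewrite mul0mx addr0.
  case=> u0 _ Hu0.
  apply/row_subP => i.
  have : [set q2 + u *m C2 | u in [set: 'rV[R]_m2]] (q1 + delta_mx 0 i *m C1).
    by rewrite -E; exists (delta_mx 0 i).
  case=> u _ Hu.
  have -> : row i C1 = (u - u0) *m C2.
    rewrite rowE mulmxBl.
    apply: (addrI q1); rewrite -Hu -Hu0.
    by rewrite [u *m C2 - _]addrC addrA addrK.
  exact: submxMl.
move=> f1 f2 E.
have h1 := sub _ _ _ _ _ _ E.
have h2 := sub _ _ _ _ _ _ (esym E).
move: f1 f2; rewrite /row_free => /eqP <- /eqP <-.
by apply/eqP; rewrite eqn_leq !mxrankS.
Qed.

Lemma hyp_cap_sub n (w : 'I_n -> 'rV[R]_d) h (S T : {set 'I_n}) :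
  S \subset T -> hyp_cap w h T `<=` hyp_cap w h S.
Proof.
move=> ST y hy i /= iS; apply: hy => /=; exact: (fintype.subsetP ST _ iS).
Qed.

Lemma key n (w : 'I_n -> 'rV[R]_d) h (X : set 'rV[R]_d) (x : 'rV[R]_d) (tau : {set 'I_n}) j :
  stable w h X -> X x -> (forall k, k \in tau -> dotv (w k) x - h k = 0) -> j \in tau ->
  exists vj, dotv (w j) vj < 0 /\ forall k, k \in tau -> k != j -> dotv (w k) vj = 0.
Proof.
move=> [_ [_ st]] Xx tx jt.
have capx : forall S : {set 'I_n}, S \subset tau -> hyp_cap w h S x.
  move=> S ST i /= iS; rewrite /hyp /=; apply: tx; exact: (fintype.subsetP ST _ iS).
have [le1 [p1 [B1 [f1 E1]]]] := st tau (ex_intro _ x (conj Xx (capx _ (subxx _)))).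
have sD : tau :\ j \subset tau by apply: subsetDl.
have [_ [p2 [B2 [f2 E2]]]] := st (tau :\ j) (ex_intro _ x (conj Xx (capx _ sD))).
have nsub : ~ (hyp_cap w h (tau :\ j) `<=` hyp_cap w h tau).
  move=> sub.
  have eq : hyp_cap w h (tau :\ j) = hyp_cap w h tau.
    by apply/seteqP; split => //; exact: hyp_cap_sub.
  rewrite eq E1 in E2.
  have := aff_dim_uniq _ _ _ _ _ _ f1 f2 E2.
  have := cardsD1 j tau; rewrite jt add1n.
  move: le1; set a := #|tau|; set b := #|tau :\ j|. lia.
have [y [Hy1 Hy2]] : exists y, hyp_cap w h (tau :\ j) y /\ ~ hyp_cap w h tau y.
  apply: contrapT => H; apply: nsub => y hy; apply: contrapT => hny; apply: H; by exists y.
have cj : dotv (w j) y - h j != 0.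
  apply/negP => /eqP c0; apply: Hy2 => i /= it.
  have [->|ij] := eqVneq i j; first exact: c0.
  by apply: Hy1 => /=; rewrite !inE ij.
exists ((- (dotv (w j) y - h j)) *: (y - x)); split.
  rewrite dotvZ dotvB.
  have -> : dotv (w j) y - dotv (w j) x = dotv (w j) y - h j.
    by have := tx j jt; move=> e; rewrite -[dotv (w j) x](subrK (h j)) e add0r.
  by rewrite mulNr oppr_lt0 -expr2 exprn_even_gt0.
move=> k kt kj.
rewrite dotvZ dotvB.
have e1 : dotv (w k) y - h k = 0 by apply: Hy1 => /=; rewrite !inE kj.
have e2 := tx k kt.
have -> : dotv (w k) y - dotv (w k) x = (dotv (w k) y - h k) - (dotv (w k) x - h k).
  by rewrite opprB addrA subrK.
by rewrite e1 e2 subrr mulr0.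
Qed.
End Aux.

Theorem lemma2p4 (R : realType) (d n : nat) (w : 'I_n -> 'rV[R]_d) (h : 'I_n -> R)
  (X : set 'rV[R]_d) :
  (forall i, w i != 0) ->
  stable w h X ->
  forall sigma : {set 'I_n},
    atom w h X sigma !=set0 -> interior (atom w h X sigma) !=set0.
Proof.
move=> _ stX sigma [x [Xx [Hpos Hneg]]].
have oX := stX.1.
set tau : {set 'I_n} := [set j | (j \notin sigma) && (dotv (w j) x - h j == 0)]%SET.
have tx : forall k, k \in tau -> dotv (w k) x - h k = 0.
  by move=> k; rewrite inE => /andP[_ /eqP].
have : forall j, exists vj, j \in tau ->
    dotv (w j) vj < 0 /\ forall k, k \in tau -> k != j -> dotv (w k) vj = 0.
  move=> j; have [jt|jt] := boolP (j \in tau).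
    have [vj Hv] := @key R d n w h X x tau j stX Xx tx jt.
    by exists vj.
  by exists 0.
move=> /choice [V HV].
set v := \sum_(j in tau) V j.
have Hv : forall k, k \in tau -> dotv (w k) v < 0.
  move=> k kt; rewrite /v dotv_sum (bigD1 k) //= big1 ?addr0; first by have [] := HV k kt.
  move=> j /andP[jt jk]; have [_ ] := HV j jt; apply => //.
  by rewrite eq_sym.
pose g : R -> 'rV[R]_d := fun e : R => x + e *: v.
have fg : forall i e, dotv (w i) (g e) - h i = (dotv (w i) x - h i) + e * dotv (w i) v.
  by move=> i e; rewrite /g dotvD dotvZ addrAC.
have cvl : forall a c : R, (fun e : R => a + e * c) @ 0^'+ --> a.
  move=> a c; apply: cvg_at_right_filter.
  suff : (fun e : R => a + e * c) @ 0 --> a + 0 * c by rewrite mul0r addr0.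
  apply: cvgD; first exact: cvg_cst.
  apply: cvgM; [exact: cvg_id | exact: cvg_cst].
have cg : g @ 0^'+ --> x.
  apply: cvg_at_right_filter.
  suff : g @ 0 --> x + 0 *: v by rewrite scale0r addr0.
  apply: cvgD; first exact: cvg_cst.
  apply: cvgZ; [exact: cvg_id | exact: cvg_cst].
have NE : \forall e \near 0^'+, X (g e) /\ forall i,
    (i \in sigma -> 0 < dotv (w i) (g e) - h i) /\ (i \notin sigma -> dotv (w i) (g e) - h i < 0).
  apply/near_andP; split.
    apply: cg; apply: open_nbhs_nbhs; split => //.
  apply: filter_forall => i.
  apply/near_andP; split.
    have [iS|iS] := boolP (i \in sigma).
      have := Hpos i iS; move: (cvl (dotv (w i) x - h i) (dotv (w i) v)) => /cvgr_gt H /H {H}.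
      by apply: filterS => e He _; rewrite fg.
    by apply: nearW => e; move: iS; case: (i \in sigma).
  have [iS|iS] := boolP (i \in sigma).
    by apply: nearW => e; move: iS; case: (i \in sigma).
  have le0 : dotv (w i) x - h i <= 0 by rewrite leNgt; apply/negP; exact: Hneg.
  have [lt0|gt0|eq0] := ltgtP (dotv (w i) x - h i) 0.
  - move: (cvl (dotv (w i) x - h i) (dotv (w i) v)) => /cvgr_lt /(_ _ lt0).
    by apply: filterS => e He _; rewrite fg.
  - by move: le0; rewrite leNgt gt0.
  - have it : i \in tau by rewrite inE iS eq0 eqxx.
    have := nbhs_right_gt (0 : R).
    apply: filterS => e e0 _; rewrite fg eq0 add0r.
    by rewrite pmulr_rlt0 // Hv.
case: (@filter_ex _ _ (at_right_proper_filter (0:R)) _ NE) => e /= [Xe He].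
exists (g e); rewrite /interior /=.
have h1 : nbhs (g e) X by apply: open_nbhs_nbhs; split.
have h2 : forall i, nbhs (g e) (fun z =>
    (i \in sigma -> 0 < dotv (w i) z - h i) /\ (i \notin sigma -> dotv (w i) z - h i < 0)).
  move=> i.
  have [iS|iS] := boolP (i \in sigma).
    have [H _] := He i; have := H iS; rewrite subr_gt0 => H'.
    move: (@dotv_cont R d (w i) (g e)) => /cvgr_gt /(_ _ H').
    by apply: filterS => z Hz; split => // _; rewrite subr_gt0.
  have [_ H] := He i; have := H iS; rewrite subr_lt0 => H'.
  move: (@dotv_cont R d (w i) (g e)) => /cvgr_lt /(_ _ H').
  by apply: filterS => z Hz; split => // _; rewrite subr_lt0.
have h3 := filter_forall (nbhs_filter _) h2.
apply: (filterS2 _ _ h1 h3) => z Xz Hz; split => //; split.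
  by move=> i iS; have [H _] := Hz i; exact: H.
move=> i iS; have [_ H] := Hz i; have := H iS.
by rewrite /hyp_pos /= => lt0 gt0; move: (lt_trans lt0 gt0); rewrite ltxx.
Qed.
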